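(* Let $\vec H$ be a DAG and let $u,v$ be two sources of $\vec H$ such that there is a vertex $w\in R(u)\cap R(v)$ with $w\notin R(s)$ for every source $s\notin\{u,v\}$. Then in every DAG elimination forest of $\vec H$, the nodes $u$ and $v$ lie on a common root-to-leaf path (i.e., one is an ancestor of the other).
   Context: For a DAG $\vec H$, a source is a vertex of in-degree $0$; $R(s)$ is the set of vertices reachable from $s$ by a directed path. A DAG elimination forest of a DAG $\vec H$ is defined recursively: if $\vec H$ is empty, it is the empty forest; if the underlying undirected graph of $\vec H$ is disconnected, it is the union of DAG elimination forests (trees) of its connected components; if the underlying graph is connected and $\vec H$ has exactly one source $s$, it is the single-node tree $s$; otherwise (connected, at least two sources) it is a tree whose root is an arbitrarily chosen source $s$ of $\vec H$ and whose subtrees are the trees of a DAG elimination forest of the DAG obtained from $\vec H$ by deleting $s$ and all vertices reachable from $s$. Its nodes are thus the sources of $\vec H$. *)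

(* Defs.v *)
From mathcomp Require Import all_boot.
Set Implicit Arguments. Unset Strict Implicit. Unset Printing Implicit Defensive.

(* A DAG H is given by a finite vertex type T and an edge relation e : rel T
   (edge x -> y iff e x y).  Sub-DAGs arising in the recursion are induced
   subgraphs on a vertex set V : {set T}. *)
Section DAG.
Variables (T : finType) (e : rel T).

Definition acyclic : Prop := forall x y, e x y -> ~~ connect e y x.

Definition eV (V : {set T}) : rel T :=
  [rel x y | [&& x \in V, y \in V & e x y]].

Definition reach (V : {set T}) (s : T) : {set T} :=
  [set y | connect (eV V) s y].

Definition sources (V : {set T}) : {set T} :=
  [set s in V | [forall x in V, ~~ e x s]].

Definition ueV (V : {set T}) : rel T := [rel x y | eV V x y || eV V y x].

Definition comp (V : {set T}) (x : T) : {set T} :=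
  [set y in V | connect (ueV V) x y].

Definition is_component (V C : {set T}) : Prop :=
  exists2 x, x \in V & C = comp V x.

End DAG.

Inductive tree (T : Type) : Type := Node : T -> list (tree T) -> tree T.
Arguments Node {T}.

Inductive elim_tree (T : finType) (e : rel T) : {set T} -> tree T -> Prop :=
  | ET_one V s :
      sources e V = [set s] -> elim_tree e V (Node s [::])
  | ET_many V s f :
      1 < #|sources e V| -> s \in sources e V ->
      elim_forest e (V :\: reach e V s) f -> elim_tree e V (Node s f)
with elim_forest (T : finType) (e : rel T) : {set T} -> list (tree T) -> Prop :=
  | EF_nil V : V = set0 -> elim_forest e V [::]
  | EF_cons V C t f :
      is_component e V C -> elim_tree e C t ->
      elim_forest e (V :\: C) f -> elim_forest e V (t :: f).

Inductive occ_tree (T : Type) (x : T) : tree T -> Prop :=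
  | OT_root f : occ_tree x (Node x f)
  | OT_sub y f : occ_forest x f -> occ_tree x (Node y f)
with occ_forest (T : Type) (x : T) : list (tree T) -> Prop :=
  | OF_here t f : occ_tree x t -> occ_forest x (t :: f)
  | OF_there t f : occ_forest x f -> occ_forest x (t :: f).

Inductive anc_tree (T : Type) (u v : T) : tree T -> Prop :=
  | AT_root f : occ_forest v f -> anc_tree u v (Node u f)
  | AT_sub y f : anc_forest u v f -> anc_tree u v (Node y f)
with anc_forest (T : Type) (u v : T) : list (tree T) -> Prop :=
  | AF_here t f : anc_tree u v t -> anc_forest u v (t :: f)
  | AF_there t f : anc_forest u v f -> anc_forest u v (t :: f).

(* Main.v *)
Require Import Defs.
From mathcomp Require Import all_boot.
Set Implicit Arguments. Unset Strict Implicit.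

Scheme et_ind2 := Induction for elim_tree Sort Prop
  with ef_ind2 := Induction for elim_forest Sort Prop.

Section Aux.
Variables (T : finType) (e : rel T).

Definition predcl (V : {set T}) := forall x y, e x y -> y \in V -> x \in V.

Lemma src_sub (V W : {set T}) x : x \in sources e V -> x \in W -> W \subset V ->
  x \in sources e W.
Proof.
rewrite !inE => /andP[_ /forallP H] xW /subsetP sWV; rewrite xW /=.
apply/forallP => y; apply/implyP => yW.
by have := H y; rewrite (sWV _ yW).
Qed.

Lemma src_notreach V s x : x \in sources e V -> x != s -> x \notin reach e V s.
Proof.
rewrite !inE => /andP[_ /forallP H] xs; apply/negP => /connectP[p Hp Hl].
move: Hp Hl; case/lastP: p => [|p z] /=; first by move=> _ E; rewrite E eqxx in xs.
rewrite rcons_path last_rcons => /andP[_ Hz] E; subst z.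
move: Hz; rewrite /eV /= => /and3P[H1 _ H3].
by have := H (last s p); rewrite H1 H3.
Qed.

Lemma occ_src :
  (forall V t, elim_tree e V t -> forall x, x \in sources e V -> occ_tree x t) /\
  (forall V f, elim_forest e V f -> forall x, x \in sources e V -> occ_forest x f).
Proof.
split.
- apply: (@et_ind2 T e (fun V t _ => forall x, x \in sources e V -> occ_tree x t)
                       (fun V f _ => forall x, x \in sources e V -> occ_forest x f)).
  + by move=> V s Hs x; rewrite Hs inE => /eqP ->; constructor.
  + move=> V s f _ _ _ IH x xs; case: (eqVneq x s) => [->|xns]; first by constructor.
    apply: OT_sub; apply: IH; apply: (src_sub xs); last exact: subsetDl.
    rewrite inE src_notreach //; by move: xs; rewrite inE => /andP[].
  + by move=> V E x; rewrite E inE => /andP[]; rewrite inE.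
  + move=> V C t f [x0 _ HC] _ IHt _ IHf x xs.
    have xV : x \in V by move: xs; rewrite inE => /andP[].
    case xC: (x \in C).
    * apply: OF_here; apply: IHt; apply: (src_sub xs xC).
      by rewrite HC; apply/subsetP => y; rewrite inE => /andP[].
    * apply: OF_there; apply: IHf; apply: (src_sub xs); last exact: subsetDl.
      by rewrite inE xC xV.
- apply: (@ef_ind2 T e (fun V t _ => forall x, x \in sources e V -> occ_tree x t)
                       (fun V f _ => forall x, x \in sources e V -> occ_forest x f)).
  + by move=> V s Hs x; rewrite Hs inE => /eqP ->; constructor.
  + move=> V s f _ _ _ IH x xs; case: (eqVneq x s) => [->|xns]; first by constructor.
    apply: OT_sub; apply: IH; apply: (src_sub xs); last exact: subsetDl.
    rewrite inE src_notreach //; by move: xs; rewrite inE => /andP[].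
  + by move=> V E x; rewrite E inE => /andP[]; rewrite inE.
  + move=> V C t f [x0 _ HC] _ IHt _ IHf x xs.
    have xV : x \in V by move: xs; rewrite inE => /andP[].
    case xC: (x \in C).
    * apply: OF_here; apply: IHt; apply: (src_sub xs xC).
      by rewrite HC; apply/subsetP => y; rewrite inE => /andP[].
    * apply: OF_there; apply: IHf; apply: (src_sub xs); last exact: subsetDl.
      by rewrite inE xC xV.
Qed.

Lemma predcl_reach V x y : predcl V -> connect (eV e setT) x y -> y \in V -> x \in V.
Proof.
move=> PV /connectP[p Hp ->]; elim: p x Hp => [|z p IH] x //= /andP[Hxz Hp] Hl.
have zV := IH z Hp Hl; move: Hxz; rewrite /eV /= => /and3P[_ _ H].
exact: PV H zV.
Qed.

Lemma predcl_comp V x0 : predcl V -> predcl (Defs.comp e V x0).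
Proof.
move=> PV x y Hxy; rewrite !inE => /andP[yV Hc].
have xV := PV _ _ Hxy yV; rewrite xV /=.
apply: (connect_trans Hc); apply: connect1; rewrite /ueV /eV /= xV yV Hxy.
by rewrite orbT.
Qed.

Lemma predcl_diff V s : predcl V -> predcl (V :\: reach e V s).
Proof.
move=> PV x y Hxy; rewrite !inE => /andP[yR yV].
have xV := PV _ _ Hxy yV; rewrite xV andbT; apply: contra yR => Hx.
apply: (connect_trans Hx); apply: connect1; by rewrite /eV /= xV yV Hxy.
Qed.

Lemma predcl_diffC V C : predcl V -> is_component e V C -> predcl (V :\: C).
Proof.
move=> PV [x0 _ HC] x y Hxy; rewrite !inE => /andP[yC yV].
have xV := PV _ _ Hxy yV; rewrite xV andbT; apply: contra yC => xC.
move: xC; rewrite HC !inE => /andP[_ Hc]; rewrite yV /=.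
apply: (connect_trans Hc); apply: connect1; by rewrite /ueV /eV /= xV yV Hxy.
Qed.

End Aux.

Section Main.
Variables (T : finType) (e : rel T) (u v w : T).
Hypotheses (us : u \in sources e setT) (vs : v \in sources e setT) (uv : u != v)
  (wu : w \in reach e setT u) (wv : w \in reach e setT v)
  (wo : forall s, s \in sources e setT -> s != u -> s != v ->
                    w \notin reach e setT s).

Lemma gsrc_src (V : {set T}) x : x \in sources e setT -> x \in V -> x \in sources e V.
Proof. move=> H xV; apply: (src_sub H xV); exact: subsetT. Qed.

Lemma src_gsrc (V : {set T}) x : predcl e V -> x \in sources e V -> x \in sources e setT.
Proof.
move=> PV; rewrite !inE => /andP[xV /forallP H]; apply/forallP => y.
apply/implyP => _; apply/negP => Hy; have := H y; by rewrite (PV _ _ Hy xV) Hy.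
Qed.

Lemma reach_sub (V : {set T}) s y : y \in reach e V s -> y \in reach e setT s.
Proof.
rewrite !inE; apply: connect_sub => a b; rewrite /eV /= => /and3P[_ _ H].
by apply: connect1; rewrite /eV /= !inE H.
Qed.

Lemma uvV (V : {set T}) : predcl e V -> w \in V -> u \in V /\ v \in V.
Proof.
move=> PV wV; split; apply: (predcl_reach PV) wV.
- by move: wu; rewrite inE.
- by move: wv; rewrite inE.
Qed.

Lemma tree_case (V : {set T}) s f : predcl e V -> w \in V -> 1 < #|sources e V| ->
  s \in sources e V -> elim_forest e (V :\: reach e V s) f ->
  (predcl e (V :\: reach e V s) -> w \in V :\: reach e V s ->
     anc_forest u v f \/ anc_forest v u f) ->
  anc_tree u v (Node s f) \/ anc_tree v u (Node s f).
Proof.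
move=> PV wV _ ss Hf IH.
have [uV vV] := uvV PV wV.
case: (eqVneq s u) => [Esu|nsu].
  left; subst s; apply: AT_root; apply: (proj2 (occ_src e)) Hf _ _.
  apply: (src_sub (gsrc_src vs vV)); last exact: subsetDl.
  by rewrite inE vV andbT src_notreach ?(gsrc_src vs vV) // eq_sym.
case: (eqVneq s v) => [Esv|nsv].
  right; subst s; apply: AT_root; apply: (proj2 (occ_src e)) Hf _ _.
  apply: (src_sub (gsrc_src us uV)); last exact: subsetDl.
  by rewrite inE uV andbT src_notreach ?(gsrc_src us uV) // eq_sym.
have wR : w \notin reach e V s.
  apply: contra (wo (src_gsrc PV ss) nsu nsv); exact: reach_sub.
case: IH; [exact: predcl_diff| by rewrite inE wR wV| |] => H; [left|right];
  exact: AT_sub.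
Qed.

Lemma main_ind :
  (forall V t, elim_tree e V t -> predcl e V -> w \in V ->
     anc_tree u v t \/ anc_tree v u t) /\
  (forall V f, elim_forest e V f -> predcl e V -> w \in V ->
     anc_forest u v f \/ anc_forest v u f).
Proof.
have Hone : forall V s, sources e V = [set s] -> predcl e V -> w \in V ->
    anc_tree u v (Node s [::]) \/ anc_tree v u (Node s [::]).
  move=> V s Hs PV wV; have [uV vV] := uvV PV wV.
  have := gsrc_src us uV; have := gsrc_src vs vV; rewrite Hs !inE.
  by move=> /eqP E1 /eqP E2; move: uv; rewrite E1 E2 eqxx.
have Hcons : forall V C t f, is_component e V C ->
    (predcl e C -> w \in C -> anc_tree u v t \/ anc_tree v u t) ->
    (predcl e (V :\: C) -> w \in V :\: C -> anc_forest u v f \/ anc_forest v u f) ->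
    predcl e V -> w \in V -> anc_forest u v (t :: f) \/ anc_forest v u (t :: f).
  move=> V C t f HC IHt IHf PV wV; case wC: (w \in C).
  - have PC : predcl e C by case: HC => x0 _ ->; exact: predcl_comp.
    by case: (IHt PC wC) => H; [left|right]; apply: AF_here.
  - case: IHf; [exact: predcl_diffC| by rewrite inE wC wV| |] => H; [left|right];
      exact: AF_there.
split.
- apply: (@et_ind2 T e (fun V t _ => predcl e V -> w \in V -> anc_tree u v t \/ anc_tree v u t)
                       (fun V f _ => predcl e V -> w \in V -> anc_forest u v f \/ anc_forest v u f)).
  + exact: Hone.
  + move=> V s f H1 H2 Hf IH PV wV; exact: (tree_case PV wV H1 H2 Hf IH).
  + by move=> V -> _; rewrite inE.
  + move=> V C t f HC _ IHt _ IHf; exact: (Hcons V C t f HC IHt IHf).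
- apply: (@ef_ind2 T e (fun V t _ => predcl e V -> w \in V -> anc_tree u v t \/ anc_tree v u t)
                       (fun V f _ => predcl e V -> w \in V -> anc_forest u v f \/ anc_forest v u f)).
  + exact: Hone.
  + move=> V s f H1 H2 Hf IH PV wV; exact: (tree_case PV wV H1 H2 Hf IH).
  + by move=> V -> _; rewrite inE.
  + move=> V C t f HC _ IHt _ IHf; exact: (Hcons V C t f HC IHt IHf).
Qed.

End Main.

Theorem mainTheorem5 (T : finType) (e : rel T) (u v : T) :
  acyclic e ->
  u \in sources e setT -> v \in sources e setT -> u != v ->
  (exists w : T,
      [/\ w \in reach e setT u, w \in reach e setT v &
          forall s, s \in sources e setT -> s != u -> s != v ->
                    w \notin reach e setT s]) ->
  forall F : list (tree T), elim_forest e setT F ->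
    anc_forest u v F \/ anc_forest v u F.
Proof.
move=> _ us vs uv [w [wu wv wo]] F HF.
apply: (proj2 (main_ind us vs uv wu wv wo)) HF _ _; last by rewrite inE.
by move=> x y _ _; rewrite inE.
Qed.
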